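(* Let $\Gamma$ be a set, $X$ a closed subspace of $c_0(\Gamma)$, and let $(x_n^* )$ be a sequence in $X^*$ converging weak$^*$ to $x^*\in X^*$. Then for every finite-dimensional subspace $F\subset X^*$, $$\liminf_{n\to\infty}\operatorname{dist}(x_n^*,F)\ge \liminf_{n\to\infty}\|x_n^*\|-\|x^*\|.$$ *)

(* Defs.v *)
From Stdlib Require Import Reals Lra List ClassicalEpsilon.
Open Scope R_scope.

(* Total supremum: the least upper bound of E if E is nonempty and bounded
   above, and 0 otherwise (only used on nonempty bounded sets). *)
Definition Rsup (E : R -> Prop) : R :=
  match excluded_middle_informative (bound E /\ exists x, E x) with
  | left h => proj1_sig (completeness E (proj1 h) (proj2 h))
  | right _ => 0
  end.

Definition Rinf (E : R -> Prop) : R := - Rsup (fun x => E (- x)).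

(* liminf of a real sequence: sup_n inf_{k >= n} u k (meaningful for bounded u). *)
Definition liminf (u : nat -> R) : R :=
  Rsup (fun y => exists n : nat, y = Rinf (fun z => exists k, (n <= k)%nat /\ z = u k)).

Definition in_c0 {Gamma : Type} (f : Gamma -> R) : Prop :=
  forall eps, 0 < eps -> exists l : list Gamma,
    forall g, eps <= Rabs (f g) -> In g l.

Definition supnorm {Gamma : Type} (f : Gamma -> R) : R :=
  Rsup (fun r => exists g, r = Rabs (f g)).

Definition closed_subspace_c0 {Gamma : Type} (X : (Gamma -> R) -> Prop) : Prop :=
  (forall f, X f -> in_c0 f) /\
  X (fun _ => 0) /\
  (forall a f h, X f -> X h -> X (fun g => a * f g + h g)) /\
  (forall (fs : nat -> Gamma -> R) f, (forall n, X (fs n)) -> in_c0 f ->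
     Un_cv (fun n => supnorm (fun g => fs n g - f g)) 0 -> X f).

(* Elements of X^*: functionals that are linear and bounded on X
   (their values off X are irrelevant). *)
Definition in_dual {Gamma : Type} (X : (Gamma -> R) -> Prop)
  (phi : (Gamma -> R) -> R) : Prop :=
  (forall a f h, X f -> X h -> phi (fun g => a * f g + h g) = a * phi f + phi h) /\
  (exists C, forall f, X f -> Rabs (phi f) <= C * supnorm f).

Definition dnorm {Gamma : Type} (X : (Gamma -> R) -> Prop)
  (phi : (Gamma -> R) -> R) : R :=
  Rsup (fun r => exists f, X f /\ supnorm f <= 1 /\ r = Rabs (phi f)).

Fixpoint lin_comb {Gamma : Type} (c : list R) (B : list ((Gamma -> R) -> R))
  (f : Gamma -> R) : R :=
  match c, B with
  | a :: c', b :: B' => a * b f + lin_comb c' B' f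
  | _, _ => 0
  end.

Definition dist_span {Gamma : Type} (X : (Gamma -> R) -> Prop)
  (phi : (Gamma -> R) -> R) (B : list ((Gamma -> R) -> R)) : R :=
  Rinf (fun r => exists c : list R, length c = length B /\
          r = dnorm X (fun f => phi f - lin_comb c B f)).

(* Main.v *)
Require Import Defs.
From Stdlib Require Import Reals List.
From Stdlib Require Import Lra Lia ClassicalEpsilon Classical FunctionalExtensionality.
Open Scope R_scope.


Lemma Rsup_spec (E : R -> Prop) : bound E -> (exists x, E x) -> is_lub E (Rsup E).
Proof.
  intros hb hne. unfold Rsup.
  destruct (excluded_middle_informative (bound E /\ exists x, E x)) as [h|h].
  - exact (proj2_sig (completeness E (proj1 h) (proj2 h))).
  - exfalso; tauto.
Qed.

Lemma Rsup_notb (E : R -> Prop) : ~ (bound E /\ exists x, E x) -> Rsup E = 0.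
Proof.
  intros h. unfold Rsup.
  destruct (excluded_middle_informative (bound E /\ exists x, E x)) as [h'|h'].
  - tauto.
  - reflexivity.
Qed.

Lemma Rsup_ub (E : R -> Prop) x : bound E -> E x -> x <= Rsup E.
Proof.
  intros hb hx. destruct (Rsup_spec E hb (ex_intro _ x hx)) as [h1 h2]. apply h1; auto.
Qed.

Lemma Rsup_le (E : R -> Prop) M : (forall x, E x -> x <= M) -> 0 <= M -> Rsup E <= M.
Proof.
  intros hM h0.
  destruct (classic (bound E /\ exists x, E x)) as [[hb hne]|h].
  - destruct (Rsup_spec E hb hne) as [h1 h2]. apply h2. intros y hy; auto.
  - rewrite Rsup_notb; auto.
Qed.

Lemma Rsup_le' (E : R -> Prop) M : (exists x, E x) -> (forall x, E x -> x <= M) -> Rsup E <= M.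
Proof.
  intros hne hM.
  assert (hb : bound E) by (exists M; intros y hy; auto).
  destruct (Rsup_spec E hb hne) as [h1 h2]. apply h2. intros y hy; auto.
Qed.

Lemma Rsup_ge0 (E : R -> Prop) : (forall x, E x -> 0 <= x) -> 0 <= Rsup E.
Proof.
  intros h.
  destruct (classic (bound E /\ exists x, E x)) as [[hb [x hx]]|hn].
  - apply Rle_trans with x; auto. apply Rsup_ub; auto.
  - rewrite Rsup_notb; auto; lra.
Qed.

Lemma Rsup_approx (E : R -> Prop) eps : bound E -> (exists x, E x) -> 0 < eps ->
  exists x, E x /\ Rsup E - eps < x.
Proof.
  intros hb hne he.
  destruct (Rsup_spec E hb hne) as [h1 h2].
  destruct (classic (exists x, E x /\ Rsup E - eps < x)) as [h|h]; auto.
  exfalso.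
  assert (Rsup E <= Rsup E - eps).
  { apply h2. intros y hy. destruct (Rle_dec y (Rsup E - eps)) as [|n]; auto.
    exfalso; apply h; exists y; split; auto; lra. }
  lra.
Qed.

Lemma Rinf_lb (E : R -> Prop) x : (exists m, forall y, E y -> m <= y) -> E x -> Rinf E <= x.
Proof.
  intros [m hm] hx. unfold Rinf.
  assert (- x <= Rsup (fun y => E (- y))).
  { apply Rsup_ub. exists (- m). intros y hy. specialize (hm _ hy). lra.
    rewrite Ropp_involutive; auto. }
  lra.
Qed.

Lemma Rinf_ge (E : R -> Prop) m : (exists x, E x) -> (forall y, E y -> m <= y) -> m <= Rinf E.
Proof.
  intros [x hx] hm. unfold Rinf.
  assert (Rsup (fun y => E (- y)) <= - m).
  { apply Rsup_le'. exists (- x). rewrite Ropp_involutive; auto.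
    intros y hy. specialize (hm _ hy). lra. }
  lra.
Qed.

Definition bnd {Gamma : Type} (f : Gamma -> R) := exists M, forall g, Rabs (f g) <= M.

Lemma c0_bnd {Gamma : Type} (f : Gamma -> R) : in_c0 f -> bnd f.
Proof.
  intros h. destruct (h 1 Rlt_0_1) as [l hl].
  exists (1 + fold_right (fun g acc => Rabs (f g) + acc) 0 l).
  assert (hpos : forall l', 0 <= fold_right (fun g acc => Rabs (f g) + acc) 0 l').
  { induction l'; simpl; [lra|]. pose proof (Rabs_pos (f a)); lra. }
  assert (hin : forall l' g, In g l' -> Rabs (f g) <= fold_right (fun g acc => Rabs (f g) + acc) 0 l').
  { induction l'; simpl; intros g hg; [destruct hg|].
    destruct hg as [->|hg]; [pose proof (hpos l'); lra|].
    pose proof (IHl' g hg); pose proof (Rabs_pos (f a)); lra. }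
  intros g. destruct (Rle_dec 1 (Rabs (f g))) as [h1|h1].
  - pose proof (hin l g (hl g h1)); lra.
  - pose proof (hpos l); lra.
Qed.

Lemma sup_ge {Gamma : Type} (f : Gamma -> R) g : bnd f -> Rabs (f g) <= supnorm f.
Proof.
  intros [M hM]. unfold supnorm. apply Rsup_ub.
  - exists M. intros r [g' ->]. auto.
  - exists g; auto.
Qed.

Lemma sup_le {Gamma : Type} (f : Gamma -> R) M : (forall g, Rabs (f g) <= M) -> 0 <= M -> supnorm f <= M.
Proof.
  intros h h0. unfold supnorm. apply Rsup_le; auto. intros r [g ->]; auto.
Qed.

Lemma sup_ge0 {Gamma : Type} (f : Gamma -> R) : 0 <= supnorm f.
Proof.
  unfold supnorm. apply Rsup_ge0. intros r [g ->]. apply Rabs_pos.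
Qed.

Lemma X0 {G : Type} (X : (G -> R) -> Prop) : closed_subspace_c0 X -> X (fun _ => 0).
Proof. intros h; apply h. Qed.

Lemma X_lin {G : Type} (X : (G -> R) -> Prop) a f h : closed_subspace_c0 X -> X f -> X h ->
  X (fun g => a * f g + h g).
Proof. intros hX; apply hX. Qed.

Lemma X_bnd {G : Type} (X : (G -> R) -> Prop) f : closed_subspace_c0 X -> X f -> bnd f.
Proof. intros hX hf; apply c0_bnd; apply hX; auto. Qed.

Lemma X_c0 {G : Type} (X : (G -> R) -> Prop) f : closed_subspace_c0 X -> X f -> in_c0 f.
Proof. intros hX hf; apply hX; auto. Qed.

Lemma X_scale {G : Type} (X : (G -> R) -> Prop) a f : closed_subspace_c0 X -> X f ->
  X (fun g => a * f g).
Proof.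
  intros hX hf.
  replace (fun g => a * f g) with (fun g => a * f g + (fun _ : G => 0) g)
    by (extensionality g; ring).
  apply X_lin; auto. apply X0; auto.
Qed.

Lemma X_add {G : Type} (X : (G -> R) -> Prop) f h : closed_subspace_c0 X -> X f -> X h ->
  X (fun g => f g + h g).
Proof.
  intros hX hf hh.
  replace (fun g => f g + h g) with (fun g => 1 * f g + h g) by (extensionality g; ring).
  apply X_lin; auto.
Qed.

Lemma X_sub {G : Type} (X : (G -> R) -> Prop) f h : closed_subspace_c0 X -> X f -> X h ->
  X (fun g => f g - h g).
Proof.
  intros hX hf hh.
  replace (fun g => f g - h g) with (fun g => -1 * h g + f g) by (extensionality g; ring).
  apply X_lin; auto.
Qed.

Lemma phi_lin {G : Type} (X : (G -> R) -> Prop) phi a f h : in_dual X phi -> X f -> X h ->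
  phi (fun g => a * f g + h g) = a * phi f + phi h.
Proof. intros hp; apply hp. Qed.

Lemma phi0 {G : Type} (X : (G -> R) -> Prop) phi : closed_subspace_c0 X -> in_dual X phi ->
  phi (fun _ => 0) = 0.
Proof.
  intros hX hp.
  pose proof (phi_lin X phi 1 (fun _ => 0) (fun _ => 0) hp (X0 X hX) (X0 X hX)) as e.
  assert (E : (fun _ : G => 1 * 0 + 0) = (fun _ : G => 0))
    by (extensionality g; ring).
  cbv beta in e. rewrite E in e. lra.
Qed.

Lemma phi_scale {G : Type} (X : (G -> R) -> Prop) phi a f : closed_subspace_c0 X -> in_dual X phi ->
  X f -> phi (fun g => a * f g) = a * phi f.
Proof.
  intros hX hp hf.
  pose proof (phi_lin X phi a f (fun _ => 0) hp hf (X0 X hX)) as e.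
  cbv beta in e.
  replace (fun g : G => a * f g + 0) with (fun g => a * f g) in e
    by (extensionality g; ring).
  rewrite e, (phi0 X phi hX hp); ring.
Qed.

Lemma phi_add {G : Type} (X : (G -> R) -> Prop) phi f h : in_dual X phi ->
  X f -> X h -> phi (fun g => f g + h g) = phi f + phi h.
Proof.
  intros hp hf hh.
  pose proof (phi_lin X phi 1 f h hp hf hh) as e.
  replace (fun g : G => 1 * f g + h g) with (fun g => f g + h g) in e
    by (extensionality g; ring).
  rewrite e; ring.
Qed.

Lemma phi_sub {G : Type} (X : (G -> R) -> Prop) phi f h : in_dual X phi ->
  X f -> X h -> phi (fun g => f g - h g) = phi f - phi h.
Proof.
  intros hp hf hh.
  pose proof (phi_lin X phi (-1) h f hp hh hf) as e.
  replace (fun g : G => -1 * h g + f g) with (fun g => f g - h g) in e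
    by (extensionality g; ring).
  rewrite e; ring.
Qed.

Lemma phi_bnd {G : Type} (X : (G -> R) -> Prop) phi : in_dual X phi ->
  exists C, 0 <= C /\ forall f, X f -> Rabs (phi f) <= C * supnorm f.
Proof.
  intros [_ [C hC]]. exists (Rabs C). split; [apply Rabs_pos|].
  intros f hf. specialize (hC f hf). pose proof (sup_ge0 f).
  pose proof (Rle_abs C). nra.
Qed.

Lemma sup_zero {G : Type} : supnorm (fun _ : G => 0) <= 0.
Proof. apply sup_le; [intros; rewrite Rabs_R0; lra | lra]. Qed.

Lemma dnorm_set_bound {G : Type} (X : (G -> R) -> Prop) phi : in_dual X phi ->
  bound (fun r => exists f, X f /\ supnorm f <= 1 /\ r = Rabs (phi f)).
Proof.
  intros hp. destruct (phi_bnd X phi hp) as [C [hC0 hC]].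
  exists C. intros r [f [hf [hs ->]]]. specialize (hC f hf). nra.
Qed.

Lemma dnorm_ge0 {G : Type} (X : (G -> R) -> Prop) phi : 0 <= dnorm X phi.
Proof. unfold dnorm. apply Rsup_ge0. intros r [f [_ [_ ->]]]. apply Rabs_pos. Qed.

Lemma dnorm_ge {G : Type} (X : (G -> R) -> Prop) phi f : in_dual X phi -> X f -> supnorm f <= 1 ->
  Rabs (phi f) <= dnorm X phi.
Proof.
  intros hp hf hs. unfold dnorm. apply Rsup_ub. apply dnorm_set_bound; auto.
  exists f; auto.
Qed.

Lemma dnorm_le {G : Type} (X : (G -> R) -> Prop) phi M :
  (forall f, X f -> supnorm f <= 1 -> Rabs (phi f) <= M) -> 0 <= M -> dnorm X phi <= M.
Proof.
  intros h h0. unfold dnorm. apply Rsup_le; auto. intros r [f [hf [hs ->]]]; auto.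
Qed.

Lemma dnorm_bound {G : Type} (X : (G -> R) -> Prop) phi f : closed_subspace_c0 X -> in_dual X phi ->
  X f -> Rabs (phi f) <= dnorm X phi * supnorm f.
Proof.
  intros hX hp hf. pose proof (sup_ge0 f) as hs0. pose proof (dnorm_ge0 X phi).
  destruct (Req_dec (supnorm f) 0) as [e|ne].
  - assert (ef : f = (fun _ => 0)).
    { extensionality g. pose proof (sup_ge f g (X_bnd X f hX hf)).
      rewrite e in H0. pose proof (Rabs_pos (f g)).
      destruct (Req_dec (f g) 0) as [|hne]; auto. pose proof (Rabs_pos_lt _ hne); lra. }
    subst f. rewrite (phi0 X phi hX hp), Rabs_R0. nra.
  - set (s := supnorm f) in *.
    assert (hs : 0 < s) by lra.
    assert (h1 : supnorm (fun g => / s * f g) <= 1).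
    { apply sup_le; [|lra]. intros g. rewrite Rabs_mult, Rabs_inv, (Rabs_pos_eq s) by lra.
      pose proof (sup_ge f g (X_bnd X f hX hf)). fold s in H0.
      apply Rmult_le_reg_l with s; auto. rewrite <- Rmult_assoc, Rinv_r by lra. lra. }
    pose proof (dnorm_ge X phi _ hp (X_scale X (/ s) f hX hf) h1) as h2.
    rewrite (phi_scale X phi (/ s) f hX hp hf), Rabs_mult, Rabs_inv, (Rabs_pos_eq s) in h2 by lra.
    apply Rmult_le_reg_l with (/ s). apply Rinv_0_lt_compat; auto.
    replace (/ s * (dnorm X phi * s)) with (dnorm X phi) by (field; lra). lra.
Qed.

Lemma dnorm_approx {G : Type} (X : (G -> R) -> Prop) phi eps : closed_subspace_c0 X ->
  in_dual X phi -> 0 < eps ->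
  exists f, X f /\ supnorm f <= 1 /\ dnorm X phi - eps <= phi f.
Proof.
  intros hX hp he.
  destruct (Rsup_approx _ eps (dnorm_set_bound X phi hp)) as [r [[f [hf [hs ->]]] hr]]; auto.
  { exists (Rabs (phi (fun _ => 0))), (fun _ => 0). split; [apply X0; auto|]. split; auto.
    pose proof (@sup_zero G); lra. }
  fold (dnorm X phi) in hr.
  destruct (Rle_dec 0 (phi f)) as [hpos|hneg].
  - exists f; split; auto; split; auto. rewrite Rabs_pos_eq in hr; lra.
  - exists (fun g => -1 * f g). split; [apply X_scale; auto|]. split.
    + apply sup_le; [|lra]. intros g. rewrite Rabs_mult. replace (Rabs (-1)) with 1 by (unfold Rabs; destruct Rcase_abs; lra).
      pose proof (sup_ge f g (X_bnd X f hX hf)); lra.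
    + rewrite (phi_scale X phi (-1) f hX hp hf). rewrite Rabs_left in hr; lra.
Qed.

Lemma Rabs_bt x y : Rabs x <= y <-> - y <= x <= y.
Proof. unfold Rabs; destruct (Rcase_abs x); split; intros; lra. Qed.

Definition inf (T : nat -> Prop) := forall N, exists n, (N <= n)%nat /\ T n.

Lemma inf_split (T P Q : nat -> Prop) : inf T -> (forall r, T r -> P r \/ Q r) ->
  inf (fun r => T r /\ P r) \/ inf (fun r => T r /\ Q r).
Proof.
  intros hT hPQ.
  destruct (classic (inf (fun r => T r /\ P r))) as [h|h]; [left; auto|right].
  unfold inf in h. apply not_all_ex_not in h. destruct h as [N1 h1].
  intros N2. destruct (hT (max N1 N2)) as [n [hn Tn]].
  exists n. split; [lia|]. split; auto.
  destruct (hPQ n Tn) as [p|q]; auto.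
  exfalso; apply h1. exists n; split; auto; lia.
Qed.

Lemma cells (a : nat -> R) d : 0 < d -> forall K : nat, forall (T : nat -> Prop) lo, inf T ->
  (forall r, T r -> lo <= a r <= lo + INR K * d) ->
  exists T', inf T' /\ (forall r, T' r -> T r) /\
    forall r r', T' r -> T' r' -> Rabs (a r - a r') <= d.
Proof.
  intros hd K. induction K as [|K IH]; intros T lo hT hb.
  - exists T. split; auto. split; auto. intros r r' h1 h2.
    pose proof (hb r h1); pose proof (hb r' h2). simpl in *.
    rewrite Rabs_bt. lra.
  - destruct (inf_split T (fun r => a r <= lo + d) (fun r => lo + d <= a r) hT) as [h|h].
    { intros r _. lra. }
    + exists (fun r => T r /\ a r <= lo + d). split; auto. split; [intros r []; auto|].
      intros r r' [h1 h1'] [h2 h2']. pose proof (hb r h1); pose proof (hb r' h2).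
      rewrite Rabs_bt. lra.
    + destruct (IH _ (lo + d) h) as [T' [h1 [h2 h3]]].
      { intros r [hr1 hr2]. pose proof (hb r hr1). rewrite S_INR in H. lra. }
      exists T'. split; auto. split; auto. intros r hr; apply h2; auto.
Qed.

Lemma refine1 (a : nat -> R) d M (T : nat -> Prop) : 0 < d -> inf T ->
  (forall r, T r -> Rabs (a r) <= M) ->
  exists T', inf T' /\ (forall r, T' r -> T r) /\
    forall r r', T' r -> T' r' -> Rabs (a r - a r') <= d.
Proof.
  intros hd hT hb.
  destruct (INR_archimed d (2 * Rabs M) hd) as [K hK].
  apply (cells a d hd K T (- Rabs M) hT).
  intros r hr. specialize (hb r hr). pose proof (Rle_abs M).
  apply Rabs_bt in hb. split; lra.
Qed.

Lemma refine_list {I : Type} (l : list I) (a : I -> nat -> R) d : 0 < d ->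
  forall T : nat -> Prop, inf T ->
  (forall i, In i l -> exists M, forall r, T r -> Rabs (a i r) <= M) ->
  exists T', inf T' /\ (forall r, T' r -> T r) /\
    forall i, In i l -> forall r r', T' r -> T' r' -> Rabs (a i r - a i r') <= d.
Proof.
  intros hd. induction l as [|i l IH]; intros T hT hb.
  - exists T. split; auto. split; auto. intros i [].
  - destruct (hb i (or_introl eq_refl)) as [M hM].
    destruct (refine1 (a i) d M T hd hT hM) as [T1 [h1 [h2 h3]]].
    destruct (IH T1 h1) as [T2 [g1 [g2 g3]]].
    { intros j hj. destruct (hb j (or_intror hj)) as [M' hM']. exists M'.
      intros r hr; apply hM'; auto. }
    exists T2. split; auto. split; [intros r hr; auto|].
    intros j [<-|hj] r r' hr hr'; auto.
Qed.

Definition lsum (t : nat -> R) (ps : list nat) : R := fold_right (fun p acc => t p + acc) 0 ps.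

Lemma lsum_cons t p ps : lsum t (p :: ps) = t p + lsum t ps.
Proof. reflexivity. Qed.

Lemma lsum_ge t ps m : (forall p, In p ps -> m <= t p) -> INR (length ps) * m <= lsum t ps.
Proof.
  induction ps as [|p ps IH]; intros h; [simpl; lra|].
  rewrite lsum_cons. change (length (p :: ps)) with (S (length ps)). rewrite S_INR.
  pose proof (h p (or_introl eq_refl)).
  assert (INR (length ps) * m <= lsum t ps) by (apply IH; intros; apply h; right; auto). lra.
Qed.

Lemma lsum_abs t ps m : (forall p, In p ps -> Rabs (t p) <= m) -> Rabs (lsum t ps) <= INR (length ps) * m.
Proof.
  induction ps as [|p ps IH]; intros h; [simpl; rewrite Rabs_R0; lra|].
  rewrite lsum_cons. change (length (p :: ps)) with (S (length ps)). rewrite S_INR.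
  pose proof (h p (or_introl eq_refl)).
  assert (Rabs (lsum t ps) <= INR (length ps) * m) by (apply IH; intros; apply h; right; auto).
  pose proof (Rabs_triang (t p) (lsum t ps)). lra.
Qed.

Definition sumd {G : Type} (f : nat -> G -> R) (r : nat) (ps : list nat) (g : G) : R :=
  lsum (fun p => f r g - f p g) ps.

Lemma build {G : Type} (f : nat -> G -> R) d (T0 : nat -> Prop) :
  0 < d -> inf T0 -> (forall r, in_c0 (f r)) -> (forall r g, Rabs (f r g) <= 1) ->
  forall K : nat, exists ps (T : nat -> Prop),
    length ps = K /\ inf T /\ (forall p, In p ps -> T0 p) /\ (forall r, T r -> T0 r) /\
    (forall r g, T r -> (forall p, In p ps -> Rabs (f p g) < d) ->
       Rabs (sumd f r ps g) <= INR K * (1 + d)) /\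
    (forall r g, T r -> (exists p, In p ps /\ d <= Rabs (f p g)) ->
       Rabs (sumd f r ps g) <= INR K + 1 + INR K * d) /\
    (forall r r' g, T r -> T r' -> (exists p, In p ps /\ d <= Rabs (f p g)) ->
       Rabs (f r g - f r' g) <= d).
Proof.
  intros hd hT0 hc0 h1 K. induction K as [|K IH].
  - exists nil, T0. simpl. split; auto. split; auto. split; [intros p []|]. split; auto.
    split; [intros; unfold sumd; simpl; rewrite Rabs_R0; lra|].
    split; [intros r g ? [p [[] _]] | intros r r' g ? ? [p [[] _]]].
  - destruct IH as [ps [T [hl [hT [hps [hTT0 [ha [hb hc]]]]]]]].
    destruct (hT 0%nat) as [p [_ Tp]].
    destruct (hc0 p d hd) as [l hlist].
    destruct (refine_list l (fun g r => f r g) d hd T hT) as [T' [hT' [hT'T hcl]]].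
    { intros g _. exists 1. intros r _. apply h1. }
    exists (p :: ps), T'. cbn [length In]. rewrite hl.
    split; auto. split; auto. split; [intros q [<-|hq]; auto|]. split; [intros r hr; auto|].
    assert (hsum : forall r g, sumd f r (p :: ps) g = (f r g - f p g) + sumd f r ps g)
      by reflexivity.
    rewrite S_INR.
    split; [|split].
    + intros r g hr hsmall. rewrite hsum.
      assert (Rabs (sumd f r ps g) <= INR K * (1 + d))
        by (apply ha; auto; intros q hq; apply hsmall; auto).
      pose proof (hsmall p (or_introl eq_refl)). pose proof (h1 r g).
      pose proof (Rabs_triang (f r g - f p g) (sumd f r ps g)).
      pose proof (Rabs_triang (f r g) (- f p g)) as Htr. rewrite Rabs_Ropp in Htr.
      unfold Rminus in *. lra.
    + intros r g hr hex. rewrite hsum.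
      pose proof (Rabs_triang (f r g - f p g) (sumd f r ps g)).
      destruct (classic (exists q, In q ps /\ d <= Rabs (f q g))) as [hold|hnew].
      * assert (Rabs (sumd f r ps g) <= INR K + 1 + INR K * d) by (apply hb; auto).
        assert (Rabs (f r g - f p g) <= d) by (apply hc; auto).
        pose proof (pos_INR K). lra.
      * assert (Rabs (sumd f r ps g) <= INR K * (1 + d)).
        { apply ha; auto. intros q hq. destruct (Rlt_dec (Rabs (f q g)) d) as [|n]; auto.
          exfalso; apply hnew; exists q; split; auto; lra. }
        pose proof (h1 r g). pose proof (h1 p g).
        pose proof (Rabs_triang (f r g) (- f p g)) as Htr. rewrite Rabs_Ropp in Htr.
        unfold Rminus in *. pose proof (pos_INR K). lra.
    + intros r r' g hr hr' [q [[<-|hq] hqg]].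
      * apply hcl; auto.
      * apply hc; auto. exists q; auto.
Qed.

Lemma sumd_X {G : Type} (X : (G -> R) -> Prop) f q ps : closed_subspace_c0 X ->
  (forall r, X (f r)) -> X (fun g => sumd f q ps g).
Proof.
  intros hX hf. induction ps as [|p ps IH].
  - apply X0; auto.
  - change (X (fun g => (f q g - f p g) + sumd f q ps g)).
    apply (X_add X (fun g => f q g - f p g) (fun g => sumd f q ps g)); auto.
    apply X_sub; auto.
Qed.

Lemma sumd_phi {G : Type} (X : (G -> R) -> Prop) phi f q ps : closed_subspace_c0 X ->
  in_dual X phi -> (forall r, X (f r)) ->
  phi (fun g => sumd f q ps g) = lsum (fun p => phi (f q) - phi (f p)) ps.
Proof.
  intros hX hp hf. induction ps as [|p ps IH].
  - exact (phi0 X phi hX hp).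
  - change (phi (fun g => (f q g - f p g) + sumd f q ps g) =
            (phi (f q) - phi (f p)) + lsum (fun p => phi (f q) - phi (f p)) ps).
    rewrite (phi_add X phi (fun g => f q g - f p g) (fun g => sumd f q ps g)); auto.
    + rewrite (phi_sub X phi); auto. rewrite IH; auto.
    + apply X_sub; auto.
    + apply sumd_X; auto.
Qed.

Lemma eventually_list (u : nat -> (nat -> R)) ps d : 0 < d ->
  (forall p, Un_cv (u p) 0) -> exists M, forall q, (M <= q)%nat -> forall p, In p ps -> Rabs (u p q) <= d.
Proof.
  intros hd hu. induction ps as [|p ps IH].
  - exists 0%nat. intros q _ p [].
  - destruct IH as [M1 hM1]. destruct (hu p d hd) as [M2 hM2].
    exists (max M1 M2). intros q hq r [<-|hr].
    + specialize (hM2 q ltac:(lia)). unfold R_dist in hM2. rewrite Rminus_0_r in hM2. lra.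
    + apply hM1; auto; lia.
Qed.

Lemma hump {G : Type} (X : (G -> R) -> Prop) (u : nat -> (G -> R) -> R)
  (C : list ((G -> R) -> R)) eps :
  closed_subspace_c0 X -> (forall n, in_dual X (u n)) ->
  (forall f, X f -> Un_cv (fun n => u n f) 0) ->
  (forall b, In b C -> in_dual X b) -> 0 < eps ->
  exists N, forall n, (N <= n)%nat -> exists h, X h /\ supnorm h <= 1 + eps /\
     (forall b, In b C -> Rabs (b h) <= eps) /\ dnorm X (u n) - eps <= u n h.
Proof.
  intros hX hu hnull hC he.
  set (P := fun n => exists h, X h /\ supnorm h <= 1 + eps /\
     (forall b, In b C -> Rabs (b h) <= eps) /\ dnorm X (u n) - eps <= u n h).
  destruct (classic (exists N, forall n, (N <= n)%nat -> P n)) as [hh|hh]; [exact hh|].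
  exfalso.
  assert (hS : inf (fun n => ~ P n)).
  { intros N. apply NNPP. intros hn. apply hh. exists N. intros n hn'.
    apply NNPP. intros hp. apply hn. exists n; auto. }
  set (d := eps / 4).
  assert (hd : 0 < d) by (unfold d; lra).
  assert (hf : forall n, exists f, X f /\ supnorm f <= 1 /\ dnorm X (u n) - d <= u n f).
  { intros n. apply dnorm_approx; auto. }
  set (f := fun n => proj1_sig (constructive_indefinite_description _ (hf n))).
  assert (hfs : forall n, X (f n) /\ supnorm (f n) <= 1 /\ dnorm X (u n) - d <= u n (f n)).
  { intros n. unfold f. exact (proj2_sig (constructive_indefinite_description _ (hf n))). }
  assert (hfX : forall n, X (f n)) by (intros n; apply hfs).
  assert (hf1 : forall n g, Rabs (f n g) <= 1).
  { intros n g. pose proof (sup_ge (f n) g (X_bnd X _ hX (hfX n))). pose proof (proj1 (proj2 (hfs n))). lra. }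
  destruct (refine_list C (fun b r => b (f r)) d hd _ hS) as [T0 [hT0 [hT0S hT0c]]].
  { intros b hb. destruct (phi_bnd X b (hC b hb)) as [Cb [hCb0 hCb]]. exists Cb.
    intros r _. specialize (hCb (f r) (hfX r)). pose proof (proj1 (proj2 (hfs r))).
    pose proof (sup_ge0 (f r)). nra. }
  destruct (INR_archimed d 1 hd) as [K hK].
  assert (hK0 : 0 < INR K).
  { destruct K; [simpl in hK; lra|]. apply lt_0_INR; lia. }
  destruct (build f d T0 hd hT0 (fun r => X_c0 X _ hX (hfX r)) hf1 K)
    as [ps [T [hl [hT [hps [hTT0 [ha [hb hc]]]]]]]].
  destruct (eventually_list (fun p q => u q (f p)) ps d hd) as [M hM].
  { intros p. apply hnull; auto. }
  destruct (hT M) as [q [hqM Tq]].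
  assert (hnP : ~ P q) by (apply hT0S, hTT0; auto).
  apply hnP.
  set (h := fun g => / INR K * sumd f q ps g).
  assert (hX' : X h) by (apply X_scale; auto; apply sumd_X; auto).
  exists h. split; auto.
  assert (hKi : 0 < / INR K) by (apply Rinv_0_lt_compat; auto).
  split; [|split].
  - apply sup_le; [|lra]. intros g. unfold h. rewrite Rabs_mult, (Rabs_pos_eq (/ INR K)) by lra.
    assert (Rabs (sumd f q ps g) <= INR K + 1 + INR K * d).
    { destruct (classic (exists p, In p ps /\ d <= Rabs (f p g))) as [e|ne].
      - apply hb; auto.
      - assert (Rabs (sumd f q ps g) <= INR K * (1 + d)).
        { apply ha; auto. intros p hp. destruct (Rlt_dec (Rabs (f p g)) d) as [|n]; auto.
          exfalso; apply ne; exists p; split; auto; lra. }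
        lra. }
    apply Rmult_le_reg_l with (INR K); auto.
    rewrite <- Rmult_assoc, Rinv_r by lra.
    unfold d in *. nra.
  - intros b hbC. unfold h. rewrite (phi_scale X b); auto; [|apply sumd_X; auto].
    rewrite (sumd_phi X b); auto. rewrite Rabs_mult, (Rabs_pos_eq (/ INR K)) by lra.
    pose proof (lsum_abs (fun p => b (f q) - b (f p)) ps d) as hL.
    rewrite hl in hL.
    assert (Rabs (lsum (fun p => b (f q) - b (f p)) ps) <= INR K * d).
    { apply hL. intros p hp. apply hT0c; auto. }
    apply Rmult_le_reg_l with (INR K); auto.
    rewrite <- Rmult_assoc, Rinv_r by lra. unfold d in *. nra.
  - unfold h. rewrite (phi_scale X (u q)); auto; [|apply sumd_X; auto].
    rewrite (sumd_phi X (u q)); auto.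
    pose proof (lsum_ge (fun p => u q (f q) - u q (f p)) ps (dnorm X (u q) - 2 * d)) as hL.
    rewrite hl in hL.
    assert (INR K * (dnorm X (u q) - 2 * d) <= lsum (fun p => u q (f q) - u q (f p)) ps).
    { apply hL. intros p hp. pose proof (hM q hqM p hp) as e. simpl in e.
      apply Rabs_bt in e. pose proof (proj2 (proj2 (hfs q))). lra. }
    apply Rmult_le_reg_l with (INR K); auto.
    rewrite <- Rmult_assoc, Rinv_r by lra. unfold d in *. nra.
Qed.

Definition sabs {G : Type} (B : list ((G -> R) -> R)) (h : G -> R) : R :=
  fold_right (fun b acc => Rabs (b h) + acc) 0 B.

Lemma sabs_ge0 {G : Type} (B : list ((G -> R) -> R)) h : 0 <= sabs B h.
Proof. induction B; simpl; [lra|]. pose proof (Rabs_pos (a h)); lra. Qed.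

Lemma sabs_le {G : Type} (B : list ((G -> R) -> R)) h e :
  (forall b, In b B -> Rabs (b h) <= e) -> sabs B h <= INR (length B) * e.
Proof.
  induction B as [|b B IH]; intros hb; [simpl; lra|].
  change (sabs (b :: B) h) with (Rabs (b h) + sabs B h).
  change (length (b :: B)) with (S (length B)). rewrite S_INR.
  pose proof (hb b (or_introl eq_refl)).
  assert (sabs B h <= INR (length B) * e) by (apply IH; intros; apply hb; right; auto). lra.
Qed.

Lemma correct {G : Type} (X : (G -> R) -> Prop) (B : list ((G -> R) -> R)) :
  closed_subspace_c0 X -> (forall b, In b B -> in_dual X b) ->
  exists K, 0 <= K /\ forall h, X h -> exists h', X h' /\ (forall b, In b B -> b h' = 0) /\
    supnorm (fun g => h g - h' g) <= K * sabs B h.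
Proof.
  intros hX. induction B as [|b B IH]; intros hB.
  - exists 0. split; [lra|]. intros h hh. exists h. split; auto. split; [intros b []|].
    apply sup_le; [|simpl; lra]. intros g. replace (h g - h g) with 0 by ring. rewrite Rabs_R0; simpl; lra.
  - destruct IH as [K' [hK'0 hK']]. { intros; apply hB; right; auto. }
    assert (hb : in_dual X b) by (apply hB; left; auto).
    destruct (phi_bnd X b hb) as [Cb [hCb0 hCb]].
    assert (hsc : forall h, sabs (b :: B) h = Rabs (b h) + sabs B h) by reflexivity.
    destruct (classic (exists e0, X e0 /\ (forall b', In b' B -> b' e0 = 0) /\ b e0 <> 0))
      as [[e0 [he0 [he0B he0b]]]|hno].
    + set (e := fun g => / (b e0) * e0 g).
      assert (heX : X e) by (apply X_scale; auto).
      assert (heb : b e = 1).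
      { unfold e. rewrite (phi_scale X b) by auto. apply Rinv_l; auto. }
      assert (heB : forall b', In b' B -> b' e = 0).
      { intros b' hb'. unfold e. assert (hdb' : in_dual X b') by (apply hB; right; auto).
        rewrite (phi_scale X b') by auto. rewrite (he0B b') by auto. ring. }
      set (E := supnorm e). assert (hE0 : 0 <= E) by apply sup_ge0.
      exists (K' + E + Cb * K' * E). split; [pose proof (Rmult_le_pos _ _ hCb0 hK'0); pose proof (Rmult_le_pos _ _ H hE0); lra|].
      intros h hh. destruct (hK' h hh) as [h1 [hh1 [hh1B hs1]]].
      exists (fun g => h1 g - b h1 * e g).
      assert (hX2 : X (fun g => b h1 * e g)) by (apply X_scale; auto).
      split; [apply X_sub; auto|]. split.
      * intros b' [<-|hb'].
        -- rewrite (phi_sub X b) by auto. rewrite (phi_scale X b) by auto. rewrite heb; ring.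
        -- assert (hd' : in_dual X b') by (apply hB; right; auto).
           rewrite (phi_sub X b') by auto. rewrite (phi_scale X b') by auto.
           rewrite (heB b') by auto. rewrite (hh1B b') by auto. ring.
      * set (s1 := supnorm (fun g => h g - h1 g)) in *.
        assert (hX1 : X (fun g => h g - h1 g)) by (apply X_sub; auto).
        assert (hbd : Rabs (b h - b h1) <= Cb * s1).
        { rewrite <- (phi_sub X b) by auto. apply hCb; auto. }
        assert (hbh1 : Rabs (b h1) <= Rabs (b h) + Cb * s1).
        { pose proof (Rabs_triang (b h) (- (b h - b h1))). rewrite Rabs_Ropp in H.
          replace (b h + - (b h - b h1)) with (b h1) in H by ring. lra. }
        assert (hsB : sabs B h <= sabs (b :: B) h) by (rewrite hsc; pose proof (Rabs_pos (b h)); lra).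
        assert (hbS : Rabs (b h) <= sabs (b :: B) h) by (rewrite hsc; pose proof (sabs_ge0 B h); lra).
        pose proof (sup_ge0 (fun g => h g - h1 g)) as hs10. fold s1 in hs10.
        pose proof (sabs_ge0 B h).
        assert (hp1 : 0 <= Cb * s1) by (apply Rmult_le_pos; auto).
        assert (hp2 : 0 <= (Rabs (b h) + Cb * s1) * E)
          by (apply Rmult_le_pos; auto; pose proof (Rabs_pos (b h)); lra).
        apply Rle_trans with (s1 + (Rabs (b h) + Cb * s1) * E).
        { apply sup_le; [|lra]. intros g.
          replace (h g - (h1 g - b h1 * e g)) with ((h g - h1 g) + b h1 * e g) by ring.
          pose proof (Rabs_triang (h g - h1 g) (b h1 * e g)) as t1.
          rewrite Rabs_mult in t1.
          pose proof (sup_ge _ g (X_bnd X _ hX hX1)) as t2. fold s1 in t2.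
          pose proof (sup_ge e g (X_bnd X _ hX heX)) as t3. fold E in t3.
          pose proof (Rabs_pos (b h1)). pose proof (Rabs_pos (e g)).
          assert (Rabs (b h1) * Rabs (e g) <= (Rabs (b h) + Cb * s1) * E).
          { apply Rmult_le_compat; auto. }
          lra. }
        set (S := sabs (b :: B) h) in *.
        assert (hs1S : s1 <= K' * S) by (apply Rle_trans with (K' * sabs B h); auto; apply Rmult_le_compat_l; auto).
        assert (hSp : 0 <= S) by lra.
        assert (t4 : Cb * s1 <= Cb * (K' * S)) by (apply Rmult_le_compat_l; auto).
        assert (t5 : (Rabs (b h) + Cb * s1) * E <= (S + Cb * (K' * S)) * E).
        { apply Rmult_le_compat_r; auto. lra. }
        replace ((K' + E + Cb * K' * E) * S) with (K' * S + (S + Cb * (K' * S)) * E) by ring.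
        lra.
    + exists K'. split; auto. intros h hh. destruct (hK' h hh) as [h1 [hh1 [hh1B hs1]]].
      exists h1. split; auto. split.
      * intros b' [<-|hb'].
        -- apply NNPP. intros hne. apply hno. exists h1; auto.
        -- apply hh1B; auto.
      * rewrite hsc. pose proof (Rabs_pos (b h)). pose proof (sabs_ge0 B h). nra.
Qed.

Lemma dual_sub {G : Type} (X : (G -> R) -> Prop) phi psi : closed_subspace_c0 X ->
  in_dual X phi -> in_dual X psi -> in_dual X (fun f => phi f - psi f).
Proof.
  intros hX hp hq. split.
  - intros a f h hf hh. rewrite (phi_lin X phi) by auto. rewrite (phi_lin X psi) by auto. ring.
  - destruct (phi_bnd X phi hp) as [C1 [h1 hC1]]. destruct (phi_bnd X psi hq) as [C2 [h2 hC2]].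
    exists (C1 + C2). intros f hf. specialize (hC1 f hf). specialize (hC2 f hf).
    pose proof (Rabs_triang (phi f) (- psi f)). rewrite Rabs_Ropp in H. unfold Rminus. lra.
Qed.

Lemma lin_comb_dual {G : Type} (X : (G -> R) -> Prop) (B : list ((G -> R) -> R)) :
  closed_subspace_c0 X -> (forall b, In b B -> in_dual X b) -> forall c, in_dual X (lin_comb c B).
Proof.
  intros hX. induction B as [|b B IH]; intros hB c.
  - destruct c; split; simpl; [intros; ring| exists 0; intros; rewrite Rabs_R0; lra
      | intros; ring | exists 0; intros; rewrite Rabs_R0; lra].
  - destruct c as [|a c].
    + split; simpl; [intros; ring| exists 0; intros; rewrite Rabs_R0; lra].
    + assert (hb : in_dual X b) by (apply hB; left; auto).
      assert (hL : in_dual X (lin_comb c B)) by (apply IH; intros; apply hB; right; auto).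
      split.
      * intros al f h hf hh. simpl. rewrite (phi_lin X b) by auto. rewrite (phi_lin X (lin_comb c B)) by auto. ring.
      * destruct (phi_bnd X b hb) as [C1 [h1 hC1]]. destruct (phi_bnd X _ hL) as [C2 [h2 hC2]].
        exists (Rabs a * C1 + C2). intros f hf. simpl. specialize (hC1 f hf). specialize (hC2 f hf).
        pose proof (Rabs_triang (a * b f) (lin_comb c B f)). rewrite Rabs_mult in H.
        pose proof (Rabs_pos a).
        assert (Rabs a * Rabs (b f) <= Rabs a * (C1 * supnorm f)) by (apply Rmult_le_compat_l; auto).
        lra.
Qed.

Lemma lin_comb_zero {G : Type} (B : list ((G -> R) -> R)) n f : lin_comb (repeat 0 n) B f = 0.
Proof.
  revert B. induction n; intros B; simpl; [reflexivity|]. destruct B; [reflexivity|].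
  rewrite IHn. ring.
Qed.

Lemma lin_comb_kill {G : Type} (B : list ((G -> R) -> R)) c h :
  (forall b, In b B -> b h = 0) -> lin_comb c B h = 0.
Proof.
  revert B. induction c; intros B hB; simpl; [reflexivity|]. destruct B as [|b B]; [reflexivity|].
  rewrite hB by (left; auto). rewrite IHc by (intros; apply hB; right; auto). ring.
Qed.

Lemma keybound {G : Type} (X : (G -> R) -> Prop) (xs : nat -> (G -> R) -> R) x B K eh :
  closed_subspace_c0 X -> (forall n, in_dual X (xs n)) -> in_dual X x ->
  (forall f, X f -> Un_cv (fun n => xs n f) (x f)) -> (forall b, In b B -> in_dual X b) ->
  0 <= K ->
  (forall h, X h -> exists h', X h' /\ (forall b, In b B -> b h' = 0) /\
    supnorm (fun g => h g - h' g) <= K * sabs B h) ->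
  0 < eh ->
  exists N, forall n, (N <= n)%nat -> forall c,
    dnorm X (fun f => xs n f - x f) * (1 - K * INR (length B) * eh) - 2 * eh
      - dnorm X x * (K * INR (length B) * eh)
    <= (1 + eh + K * INR (length B) * eh) * dnorm X (fun f => xs n f - lin_comb c B f).
Proof.
  intros hX hxs hx hconv hB hK0 hK heh.
  set (z := fun n => fun f => xs n f - x f).
  assert (hz : forall n, in_dual X (z n)) by (intros; apply dual_sub; auto).
  assert (hznull : forall f, X f -> Un_cv (fun n => z n f) 0).
  { intros f hf e he. destruct (hconv f hf e he) as [N hN]. exists N. intros n hn.
    specialize (hN n hn). unfold R_dist in *. unfold z. rewrite Rminus_0_r. auto. }
  destruct (hump X z (x :: B) eh hX hz hznull) as [N hN]; auto.
  { intros b [<-|hb]; auto. }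
  exists N. intros n hn c.
  destruct (hN n hn) as [h [hh [hsh [hbh hzh]]]].
  destruct (hK h hh) as [h' [hh' [hB' hs']]].
  set (rho := K * INR (length B) * eh).
  assert (hsab : sabs B h <= INR (length B) * eh) by (apply sabs_le; intros; apply hbh; right; auto).
  assert (hrho : supnorm (fun g => h g - h' g) <= rho).
  { unfold rho. rewrite Rmult_assoc. apply Rle_trans with (K * sabs B h); auto.
    apply Rmult_le_compat_l; auto. }
  assert (hdX : X (fun g => h g - h' g)) by (apply X_sub; auto).
  assert (hrho0 : 0 <= rho) by (pose proof (sup_ge0 (fun g => h g - h' g)); lra).
  assert (hsh' : supnorm h' <= 1 + eh + rho).
  { apply sup_le; [|pose proof (sup_ge0 h); lra]. intros g.
    pose proof (sup_ge h g (X_bnd X _ hX hh)).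
    pose proof (sup_ge _ g (X_bnd X _ hX hdX)). simpl in H0.
    pose proof (Rabs_triang (h g) (- (h g - h' g))). rewrite Rabs_Ropp in H1.
    replace (h g + - (h g - h' g)) with (h' g) in H1 by ring. lra. }
  set (phi := fun f => xs n f - lin_comb c B f).
  assert (hphi : in_dual X phi) by (apply dual_sub; auto; apply lin_comb_dual; auto).
  assert (hphih : phi h' = z n h' + x h').
  { unfold phi, z. rewrite lin_comb_kill by auto. ring. }
  assert (hz1 : z n h' = z n h - z n (fun g => h g - h' g)) by (rewrite (phi_sub X (z n)) by auto; ring).
  assert (hz2 : Rabs (z n (fun g => h g - h' g)) <= dnorm X (z n) * rho).
  { apply Rle_trans with (dnorm X (z n) * supnorm (fun g => h g - h' g)).
    apply dnorm_bound; auto. apply Rmult_le_compat_l; auto. apply dnorm_ge0. }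
  assert (hx1 : x h' = x h - x (fun g => h g - h' g)) by (rewrite (phi_sub X x) by auto; ring).
  assert (hx2 : Rabs (x (fun g => h g - h' g)) <= dnorm X x * rho).
  { apply Rle_trans with (dnorm X x * supnorm (fun g => h g - h' g)).
    apply dnorm_bound; auto. apply Rmult_le_compat_l; auto. apply dnorm_ge0. }
  assert (hxh : Rabs (x h) <= eh) by (apply hbh; left; auto).
  assert (hph : Rabs (phi h') <= dnorm X phi * (1 + eh + rho)).
  { apply Rle_trans with (dnorm X phi * supnorm h'). apply dnorm_bound; auto.
    apply Rmult_le_compat_l; auto. apply dnorm_ge0. }
  fold phi. fold (z n).
  apply Rabs_bt in hz2. apply Rabs_bt in hx2. apply Rabs_bt in hxh.
  pose proof (Rle_abs (phi h')).
  lra.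
Qed.

Lemma alg t Z D X0 K2 eh eps : 0 <= K2 -> 0 <= X0 -> 0 < eps -> 0 < eh -> eh * (K2 + 1) <= 1 ->
  eh * (2 * Rabs t * (K2 + 1) + 2 + X0 * K2) <= eps -> t <= Z -> 0 <= D ->
  Z * (1 - K2 * eh) - 2 * eh - X0 * (K2 * eh) <= (1 + eh + K2 * eh) * D -> t - eps <= D.
Proof.
  intros hK hX he heh h1 h2 htZ hD hmain.
  set (rho := K2 * eh) in *. set (sig := eh + rho).
  assert (hr0 : 0 <= rho) by (unfold rho; apply Rmult_le_pos; lra).
  assert (hr1 : rho <= 1) by (unfold rho; nra).
  assert (hZ : t * (1 - rho) <= Z * (1 - rho)) by (apply Rmult_le_compat_r; lra).
  destruct (Rle_dec (t - eps) D) as [|hlt]; auto. exfalso.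
  assert (hlt' : D < t - eps) by lra.
  assert ((1 + sig) * D <= (1 + sig) * (t - eps)).
  { apply Rmult_le_compat_l; unfold sig; lra. }
  assert (hs0 : 0 <= eps * sig) by (unfold sig; apply Rmult_le_pos; lra).
  assert (ht1 : t * sig + t * rho <= Rabs t * (sig + rho)).
  { pose proof (Rle_abs t). replace (t * sig + t * rho) with (t * (sig + rho)) by ring.
    apply Rmult_le_compat_r; unfold sig; lra. }
  assert (ht2 : Rabs t * (sig + rho) <= eh * (2 * Rabs t * (K2 + 1))).
  { unfold sig, rho. pose proof (Rabs_pos t). nra. }
  assert (ht3 : X0 * rho = eh * (X0 * K2)) by (unfold rho; ring).
  unfold sig in *. nra.
Qed.

Lemma iota_ge0 (u : nat -> R) n : (forall k, 0 <= u k) ->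
  0 <= Rinf (fun z => exists k, (n <= k)%nat /\ z = u k).
Proof.
  intros h. apply Rinf_ge. exists (u n), n; split; auto.
  intros y [k [_ ->]]; auto.
Qed.

Lemma iota_le (u : nat -> R) n k : (forall k, 0 <= u k) -> (n <= k)%nat ->
  Rinf (fun z => exists k, (n <= k)%nat /\ z = u k) <= u k.
Proof.
  intros h hk. apply Rinf_lb. exists 0. intros y [j [_ ->]]; auto. exists k; auto.
Qed.

Theorem lemma1p3 (Gamma : Type) (X : (Gamma -> R) -> Prop)
  (hX : closed_subspace_c0 X)
  (xs : nat -> (Gamma -> R) -> R) (x : (Gamma -> R) -> R)
  (hxs : forall n, in_dual X (xs n)) (hx : in_dual X x)
  (hconv : forall f, X f -> Un_cv (fun n => xs n f) (x f))
  (B : list ((Gamma -> R) -> R)) (hB : forall b, In b B -> in_dual X b) :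
  liminf (fun n => dist_span X (xs n) B) >=
  liminf (fun n => dnorm X (xs n)) - dnorm X x.
Proof.
  set (d := fun n => dist_span X (xs n) B).
  set (a := fun n => dnorm X (xs n)).
  set (X0 := dnorm X x).
  assert (hX0 : 0 <= X0) by apply dnorm_ge0.
  assert (ha0 : forall n, 0 <= a n) by (intros; apply dnorm_ge0).
  assert (hdset : forall n c, dnorm X (fun f => xs n f - lin_comb c B f) = dnorm X (fun f => xs n f - lin_comb c B f)) by auto.
  assert (hd0 : forall n, 0 <= d n).
  { intros n. unfold d, dist_span. apply Rinf_ge.
    - exists (dnorm X (fun f => xs n f - lin_comb (repeat 0 (length B)) B f)).
      exists (repeat 0 (length B)). split; auto. apply repeat_length.
    - intros y [c [_ ->]]. apply dnorm_ge0. }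
  assert (hda : forall n, d n <= a n).
  { intros n. unfold d, dist_span. apply Rinf_lb.
    - exists 0. intros y [c [_ ->]]. apply dnorm_ge0.
    - exists (repeat 0 (length B)). split; [apply repeat_length|].
      unfold a. f_equal. extensionality f. rewrite lin_comb_zero. ring. }
  assert (hza : forall n, a n <= dnorm X (fun f => xs n f - x f) + X0).
  { intros n. unfold a. apply dnorm_le.
    - intros f hf hs. assert (hz : in_dual X (fun f => xs n f - x f)) by (apply dual_sub; auto).
      pose proof (dnorm_bound X _ f hX hz hf). pose proof (dnorm_bound X _ f hX hx hf).
      fold X0 in H0. simpl in H.
      pose proof (Rabs_triang (xs n f - x f) (x f)). replace (xs n f - x f + x f) with (xs n f) in H1 by ring.
      pose proof (dnorm_ge0 X (fun f => xs n f - x f)).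
      pose proof (sup_ge0 f).
      assert (dnorm X (fun f => xs n f - x f) * supnorm f <= dnorm X (fun f => xs n f - x f)).
      { rewrite <- (Rmult_1_r (dnorm X _)) at 2. apply Rmult_le_compat_l; auto. }
      assert (X0 * supnorm f <= X0).
      { rewrite <- (Rmult_1_r X0) at 2. apply Rmult_le_compat_l; auto. }
      lra.
    - pose proof (dnorm_ge0 X (fun f => xs n f - x f)). lra. }
  destruct (correct X B hX hB) as [K [hK0 hK]].
  set (K2 := K * INR (length B)).
  assert (hK2 : 0 <= K2) by (unfold K2; apply Rmult_le_pos; auto; apply pos_INR).
  unfold liminf. fold d. fold a.
  set (Ia := fun y => exists n, y = Rinf (fun z => exists k, (n <= k)%nat /\ z = a k)).
  set (Id := fun y => exists n, y = Rinf (fun z => exists k, (n <= k)%nat /\ z = d k)).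
  assert (hId0 : 0 <= Rsup Id).
  { apply Rsup_ge0. intros y [n ->]. apply iota_ge0; auto. }
  destruct (classic (bound Ia)) as [[M hM]|hnb].
  2:{ rewrite (Rsup_notb Ia); [lra|]. intros [hb _]; auto. }
  assert (hiota : forall n, Rinf (fun z => exists k, (n <= k)%nat /\ z = d k) <=
                            Rinf (fun z => exists k, (n <= k)%nat /\ z = a k)).
  { intros n. apply Rinf_ge. exists (a n), n; split; auto.
    intros y [k [hk ->]]. apply Rle_trans with (d k); auto. apply iota_le; auto. }
  assert (hbId : bound Id).
  { exists M. intros y [n ->]. apply Rle_trans with (Rinf (fun z => exists k, (n <= k)%nat /\ z = a k)); auto.
    apply hM. exists n; auto. }
  apply Rle_ge. apply Rnot_lt_le. intros hlt.
  set (eps := (Rsup Ia - X0 - Rsup Id) / 4).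
  assert (he : 0 < eps) by (unfold eps; lra).
  destruct (Rsup_approx Ia eps) as [y [[N0 ->] hy]]; auto.
  { exists M; auto. }
  { exists (Rinf (fun z => exists k, (0 <= k)%nat /\ z = a k)), 0%nat; auto. }
  set (t := Rsup Ia - eps - X0).
  set (W := 2 * Rabs t * (K2 + 1) + 2 + X0 * K2 + 1).
  assert (hW : 0 < W) by (unfold W; pose proof (Rabs_pos t); nra).
  set (eh := Rmin (eps / W) (/ (K2 + 1))).
  assert (heh : 0 < eh).
  { unfold eh. apply Rmin_glb_lt. apply Rdiv_lt_0_compat; auto. apply Rinv_0_lt_compat; lra. }
  assert (heh1 : eh * (K2 + 1) <= 1).
  { apply Rle_trans with (/ (K2 + 1) * (K2 + 1)). apply Rmult_le_compat_r; [lra|apply Rmin_r].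
    rewrite Rinv_l; lra. }
  assert (heh2 : eh * (2 * Rabs t * (K2 + 1) + 2 + X0 * K2) <= eps).
  { apply Rle_trans with (eps / W * W).
    - apply Rmult_le_compat; [lra| pose proof (Rabs_pos t); nra | apply Rmin_l | unfold W; lra].
    - unfold Rdiv. rewrite Rmult_assoc, Rinv_l; lra. }
  destruct (keybound X xs x B K eh hX hxs hx hconv hB hK0 hK heh) as [N1 hN1].
  assert (hfin : t - eps <= Rinf (fun z => exists k, (max N0 N1 <= k)%nat /\ z = d k)).
  { apply Rinf_ge. exists (d (max N0 N1)), (max N0 N1); auto.
    intros z [k [hk ->]]. unfold d, dist_span. apply Rinf_ge.
    - exists (dnorm X (fun f => xs k f - lin_comb (repeat 0 (length B)) B f)).
      exists (repeat 0 (length B)). split; auto. apply repeat_length.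
    - intros r [c [_ ->]].
      specialize (hN1 k ltac:(lia) c). fold K2 in hN1.
      apply (alg t (dnorm X (fun f => xs k f - x f)) _ X0 K2 eh eps hK2 hX0 he heh heh1 heh2).
      + pose proof (iota_le a N0 k ha0 ltac:(lia)). pose proof (hza k). unfold t. lra.
      + apply dnorm_ge0.
      + replace (K2 * eh) with (K * INR (length B) * eh) by (unfold K2; ring). exact hN1. }
  assert (Rinf (fun z => exists k, (max N0 N1 <= k)%nat /\ z = d k) <= Rsup Id).
  { apply Rsup_ub; auto. exists (max N0 N1); auto. }
  unfold t, eps in *. lra.
Qed.
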